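(* Fix $C\ge0$. For $0\le k\le n$ put $N=n-k$ and \[ T_k=\sum_{g\in\mathcal M(k)}\Bigl|\sum_{h\in\mathcal M(N)}\psi(Q_A(gh))\Bigr|. \] Then as $n\to\infty$, uniformly for $0\le k\le 9n/20+C$, $T_k\ll_A q^{19n/20+o(n)}$.
   Context: $q$ is a fixed odd prime power; fix $m\ge0$ and $c_0,\dots,c_m\in\mathbb F_q$ with $c_m\ne0$. For each $n$, $\ell_n$ is an arbitrary linear form in the coefficients $f_0,\dots,f_n$ and for $f=\sum_{i=0}^nf_it^i$ of degree $n$, $Q_A(f)=\sum_{j=0}^m c_j\sum_{i=j}^n f_if_{i-j}+\ell_n(f)$. $\mathcal M(k)$ is the set of monic polynomials of degree $k$ in $\mathbb F_q[t]$, $\psi$ a non-trivial additive character of $\mathbb F_q$. Implied constants depend only on $q$, $C$ and $c_0,\dots,c_m$ and are uniform in $\ell_n,\psi$; $q^{o(n)}$ is a factor $q^{\varepsilon(n)n}$ with $\varepsilon(n)\to0$. *)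

(* Defs.v *)
From HB Require Import structures.
From mathcomp Require Import all_boot all_order all_algebra all_field.
From mathcomp Require Import complex.
From mathcomp Require Import reals exp.
Set Implicit Arguments. Unset Strict Implicit. Unset Printing Implicit Defensive.
Import Order.TTheory GRing.Theory Num.Theory.
Local Open Scope ring_scope.

(* The monic polynomials of degree k over F, each listed exactly once:
   t = (t_0,...,t_(k-1)) |-> t_0 + t_1 X + ... + t_(k-1) X^(k-1) + X^k. *)
Definition monic_polys (F : finFieldType) (k : nat) : seq {poly F} :=
  [seq Poly (rcons (val t) 1) | t : k.-tuple F].

Definition QA (F : finFieldType) (m : nat) (c : nat -> F) (a : nat -> F)
    (n : nat) (f : {poly F}) : F :=
  \sum_(j < m.+1) c j * (\sum_(j <= i < n.+1) f`_i * f`_(i - j))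
  + \sum_(i < n.+1) a i * f`_i.

Definition add_char (F : finFieldType) (R : realType) (psi : F -> R[i]) : Prop :=
  psi 0 = 1 /\ forall x y : F, psi (x + y) = psi x * psi y.

Definition nontrivial_char (F : finFieldType) (R : realType) (psi : F -> R[i])
  : Prop := exists x : F, psi x != 1.

(* T_k with N = n - k, where n = k + N = deg(gh) is the degree used in Q_A. *)
Definition Tk (F : finFieldType) (R : realType) (m : nat) (c a : nat -> F)
    (psi : F -> R[i]) (n k : nat) : R[i] :=
  \sum_(g <- monic_polys F k)
    `| \sum_(h <- monic_polys F (n - k)) psi (QA m c a n (g * h)) |.

(* Main.v *)
Require Import Defs.
From HB Require Import structures.
From mathcomp Require Import all_boot all_order all_algebra all_field.
From mathcomp Require Import complex.
From mathcomp Require Import reals exp.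
From mathcomp Require Import ring lra zify.
From mathcomp Require all_fingroup all_solvable.
Import Order.TTheory GRing.Theory Num.Theory.
Local Open Scope ring_scope.
Set Implicit Arguments. Unset Strict Implicit. Unset Printing Implicit Defensive.

Section Alg.
Variable F : fieldType.
Variable m : nat.
Variable c : nat -> F.
Hypothesis hcm : c m != 0.
Hypothesis h2 : (2%:R : F) != 0.

Definition Bf (n : nat) (u v : {poly F}) : F :=
  \sum_(j < m.+1) c j * (\sum_(j <= i < n.+1) (u`_i * v`_(i - j) + v`_i * u`_(i - j))).
Definition Q0 (n : nat) (f : {poly F}) : F :=
  \sum_(j < m.+1) c j * (\sum_(j <= i < n.+1) f`_i * f`_(i - j)).
Definition Lf (a : nat -> F) (n : nat) (f : {poly F}) : F :=
  \sum_(i < n.+1) a i * f`_i.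

Lemma Q0D n u v : Q0 n (u + v) = Q0 n u + Q0 n v + Bf n u v.
Proof.
rewrite /Q0 /Bf -!big_split /=; apply: eq_bigr => j _.
rewrite -!mulrDr; congr (_ * _).
rewrite -!big_split /=; apply: eq_bigr => i _.
rewrite !coefD; ring.
Qed.

Lemma LfD a n u v : Lf a n (u + v) = Lf a n u + Lf a n v.
Proof.
rewrite /Lf -big_split /=; apply: eq_bigr => i _; rewrite coefD; ring.
Qed.

Lemma BfDZ1 n (x : F) u1 u2 v : Bf n (x *: u1 + u2) v = x * Bf n u1 v + Bf n u2 v.
Proof.
rewrite /Bf mulr_sumr -big_split /=; apply: eq_bigr => j _.
rewrite mulrA [x * c j]mulrC -mulrA -mulrDr; congr (_ * _).
rewrite mulr_sumr -big_split /=; apply: eq_bigr => i _.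
rewrite !coefD !coefZ; ring.
Qed.

Lemma BfB2 n u v1 v2 : Bf n u (v1 - v2) = Bf n u v1 - Bf n u v2.
Proof.
rewrite /Bf -sumrB /=; apply: eq_bigr => j _.
rewrite -mulrBr; congr (_ * _).
rewrite -sumrB /=; apply: eq_bigr => i _.
rewrite !coefB; ring.
Qed.

Lemma Bf0 n v : Bf n 0 v = 0.
Proof.
by rewrite /Bf big1 // => j _; rewrite big1 ?mulr0 // => i _; rewrite !coef0 mul0r mulr0 addr0.
Qed.

Lemma BfD1 n u1 u2 v : Bf n (u1 + u2) v = Bf n u1 v + Bf n u2 v.
Proof. by rewrite -[u1]scale1r BfDZ1 mul1r scale1r. Qed.

Lemma Bf_sum1 n (I : Type) (r : seq I) (P : pred I) (G : I -> {poly F}) v :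
  Bf n (\sum_(i <- r | P i) G i) v = \sum_(i <- r | P i) Bf n (G i) v.
Proof.
exact: (big_morph (fun u => Bf n u v) (fun u1 u2 => BfD1 n u1 u2 v) (Bf0 n v)).
Qed.


Lemma sum_nat_pick (a b D : nat) (x : F) (G : nat -> F) :
  (a <= D < b)%N -> (forall i, (a <= i < b)%N -> G i = if i == D then x else 0) ->
  \sum_(a <= i < b) G i = x.
Proof.
move=> hD hG.
by rewrite (eq_big_nat _ _ hG) -big_mkcond /= big_nat1_eq hD.
Qed.

Lemma key (n k N : nat) (g p : {poly F}) : n = (k + N)%N -> size g = k.+1 ->
  p != 0 -> (size p + k + m <= N)%N ->
  exists s, (s < N)%N /\ Bf n (g * 'X^s) (g * p) != 0.
Proof.
move=> hn hg hp hsz.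
have g0 : g != 0 by rewrite -size_poly_gt0 hg.
have gk : g`_k != 0.
  by have := g0; rewrite -lead_coef_eq0 lead_coefE hg.
have exo : exists i, g`_i != 0 by exists k.
pose o := ex_minn exo.
have [go omin] : g`_o != 0 /\ forall i, g`_i != 0 -> (o <= i)%N.
  by rewrite /o; case: ex_minnP.
have ok : (o <= k)%N.
  exact: omin.
have glow i : (i < o)%N -> g`_i = 0.
  by move=> hi; apply/eqP; apply: contraTT hi => /omin; rewrite -leqNgt.
set d := (size p).-1.
have hsp : size p = d.+1 by rewrite /d prednK // size_poly_gt0.
set s := (d + (k - o) + m)%N.
exists s; split.
  by rewrite /s; move: hsz; rewrite hsp; lia.
set u := g * 'X^s; set v := g * p.
set V := v`_(k + d).
have hv : size v = (k + d).+1.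
  by rewrite /v size_mul // hg hsp; lia.
have vhigh l : (k + d < l)%N -> v`_l = 0.
  by move=> hl; apply: nth_default; rewrite hv.
have V0 : V != 0.
  by rewrite /V -[(k + d)%N]/((k + d).+1.-1) -hv -lead_coefE lead_coef_eq0 -size_poly_eq0 hv.
have hu i : u`_i = if (i < s)%N then 0 else g`_(i - s) by rewrite /u coefMXn.
have clA j i : (j <= m)%N -> (j <= i)%N ->
   u`_i * v`_(i - j) = if (j == m) && (i == d + k + m)%N then g`_o * V else 0.
  move=> hjm hji; rewrite hu.
  case: ifP => his; first by rewrite mul0r; case: ifP => // /andP[_ /eqP]; move: his; rewrite /s; lia.
  case: (ltnP (i - s) o) => hio; first by rewrite glow // mul0r; case: ifP => // /andP[_ /eqP]; move: his hio; rewrite /s; lia.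
  case: (ltnP (k + d) (i - j)) => hvi; first by rewrite vhigh // mulr0; case: ifP => // /andP[/eqP hj /eqP]; move: hvi hj ok; rewrite /s; lia.
  have -> : j = m by move: his hio hvi hjm ok; rewrite /s; lia.
  have -> : i = (d + k + m)%N by move: his hio hvi hjm ok; rewrite /s; lia.
  rewrite !eqxx /=; rewrite /V; congr (_ * _); [congr (g`_ _) | congr (v`_ _)]; move: ok; rewrite /s; lia.
have clB j i : (j <= m)%N -> (j <= i)%N ->
   v`_i * u`_(i - j) = if (m == 0)%N && (i == d + k)%N then V * g`_o else 0.
  move=> hjm hji; rewrite hu.
  case: ifP => his; first by rewrite mulr0; case: ifP => // /andP[/eqP hm /eqP]; move: his hjm hm ok; rewrite /s; lia.
  case: (ltnP (i - j - s) o) => hio; first by rewrite glow // mulr0; case: ifP => // /andP[/eqP hm /eqP]; move: his hio hjm hm ok; rewrite /s; lia.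
  case: (ltnP (k + d) i) => hvi; first by rewrite vhigh // mul0r; case: ifP => // /andP[/eqP hj /eqP]; move: hvi hj ok; rewrite /s; lia.
  have hm : m = 0%N by move: his hio hvi hjm ok; rewrite /s; lia.
  have -> : i = (d + k)%N by move: his hio hvi hjm ok hm; rewrite /s; lia.
  rewrite hm !eqxx /=; rewrite /V; congr (_ * _); [congr (v`_ _) | congr (g`_ _)]; move: ok hjm hm; rewrite /s; lia.
have inner j : (j <= m)%N -> \sum_(j <= i < n.+1) (u`_i * v`_(i - j) + v`_i * u`_(i - j))
     = (j == m)%:R * (g`_o * V) + (m == 0)%:R * (g`_o * V).
  move=> hjm; rewrite big_split /=; congr (_ + _).
    case: eqP => hj.
      rewrite mul1r; apply: (@sum_nat_pick _ _ (d + k + m)%N).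
        by rewrite hn; move: hsz hjm; rewrite hsp; lia.
      move=> i /andP[hji _]; rewrite clA // hj eqxx //.
    rewrite mul0r big_nat_cond big1 // => i /andP[/andP[hji _] _]; rewrite clA //.
    by move/eqP/negPf: hj => ->.
  case: eqP => hm.
    rewrite mul1r; apply: (@sum_nat_pick _ _ (d + k)%N).
      by rewrite hn; move: hsz hjm hm; rewrite hsp; lia.
    by move=> i /andP[hji _]; rewrite clB // hm eqxx /= mulrC.
  rewrite mul0r big_nat_cond big1 // => i /andP[/andP[hji _] _]; rewrite clB //.
  by move/eqP/negPf: hm => ->.
rewrite /Bf (eq_bigr (fun j : 'I_m.+1 => c j * ((j == m :> nat)%:R * (g`_o * V) + (m == 0)%:R * (g`_o * V)))); last first.
  by move=> j _; rewrite inner // -ltnS.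
rewrite (bigD1 ord_max) //= big1 ?addr0; last first.
  move=> j hj; have hjm : (j == m :> nat) = false.
    by apply/negP => /eqP hj'; move: hj; rewrite -val_eqE /= hj' eqxx.
  rewrite hjm mul0r add0r.
  case: (m =P 0)%N => hm; last by rewrite mul0r mulr0.
  by exfalso; move: hj (ltn_ord j); rewrite -val_eqE /=; move: (nat_of_ord j) => jj; rewrite hm; lia.
rewrite eqxx -mulrDl.
rewrite !mulf_neq0 //.
by case: (m == 0)%N => //=; rewrite ?addr0 ?oner_neq0.
Qed.
End Alg.

Module TwoNZ.
Import fingroup cyclic.
Lemma two_neq0 (F : finFieldType) : odd #|F| -> (2%:R : F) != 0.
Proof.
move=> hodd; apply/negP => /eqP h2.
pose one : F := GRing.one _.
have hdv : (#[one]%g %| #|F|)%N.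
  by rewrite -cardsT order_dvdG // inE.
have h1 : (#[one]%g %| 2)%N.
  by rewrite order_dvdn FinRing.zmodXgE /one h2 FinRing.zmod1gE.
have hn1 : #[one]%g != 1%N.
  by rewrite order_eq1 FinRing.zmod1gE oner_neq0.
have : #[one]%g = 2%N.
  move: h1 hn1; case: (#[one]%g) => [|[|[|r]]] //.
move=> h; move: hdv; rewrite h => /dvdnP [r hr].
by move: hodd; rewrite hr oddM /= andbF.
Qed.
End TwoNZ.

Section Char.
Variables (F : finFieldType) (R : realType) (psi : F -> R[i]).
Hypothesis hpsi : add_char psi.
Hypothesis hnt : nontrivial_char psi.

Lemma psi0 : psi 0 = 1. Proof. by case: hpsi. Qed.
Lemma psiD x y : psi (x + y) = psi x * psi y. Proof. by case: hpsi. Qed.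
Lemma psiX x n : psi (x *+ n) = psi x ^+ n.
Proof. by elim: n => [|n IH]; rewrite ?mulr0n ?expr0 ?psi0 // mulrS psiD IH exprS. Qed.

Lemma norm_psi x : `|psi x| = 1.
Proof.
have [p pp pc] := finPcharP F.
have h : psi x ^+ p = 1 by rewrite -psiX (mulrn_pchar pc) psi0.
have : `|psi x| ^+ p = 1 by rewrite -normrX h normr1.
move/eqP; rewrite pexpr_eq1 ?normr_ge0 ?prime_gt0 //; first by move/eqP.
Qed.

Lemma conj_psi x : (psi x)^*%C = psi (- x).
Proof.
have h1 : psi x * (psi x)^*%C = 1 by rewrite -sqr_normc norm_psi expr1n.
have h2 : psi x * psi (- x) = 1 by rewrite -psiD subrr psi0.
have nz : psi x != 0 by apply/negP => /eqP h0; move: h1; rewrite h0 mul0r => /eqP; rewrite eq_sym oner_eq0.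
by apply: (mulfI nz); rewrite h1 h2.
Qed.

Lemma char_sum0 N (phi : 'rV[F]_N -> F) :
  (forall a u v, phi (a *: u + v) = a * phi u + phi v) ->
  (exists v, phi v != 0) -> \sum_v psi (phi v) = 0.
Proof.
move=> hl [v0 hv0].
have [x1 hx1] := hnt.
have phi0 : phi 0 = 0.
  have := hl 1 0 0; rewrite scale1r addr0 mul1r => h.
  by have := congr1 (fun t => t - phi 0) h; rewrite subrr addrK => <-.
pose w := (x1 / phi v0) *: v0.
have hw : phi w = x1.
  by rewrite -[w]addr0 hl phi0 addr0 divfK.
have : \sum_v psi (phi v) = psi x1 * \sum_v psi (phi v).
  rewrite {1}(reindex_inj (@addIr _ w)) /= mulr_sumr; apply: eq_bigr => v _.
  by have := hl 1 v w; rewrite scale1r mul1r => ->; rewrite hw psiD mulrC.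
move/eqP; rewrite -subr_eq0 -{1}[\sum_v _]mul1r -mulrBl mulf_eq0 subr_eq0 eq_sym (negPf hx1) /=.
by move/eqP.
Qed.
End Char.
Section PV.
Variable F : fieldType.

Definition pv N (v : 'rV[F]_N) : {poly F} :=
  \poly_(i < N) (oapp (fun j : 'I_N => v 0 j) 0 (insub i)).

Lemma coef_pv_ord N (v : 'rV[F]_N) (i : 'I_N) : (pv v)`_i = v 0 i.
Proof. by rewrite /pv coef_poly ltn_ord valK. Qed.

Lemma coef_pv_ge N (v : 'rV[F]_N) j : (N <= j)%N -> (pv v)`_j = 0.
Proof. by move=> hj; rewrite /pv coef_poly ltnNge hj. Qed.

Lemma coef_pv N (v : 'rV[F]_N) j : (pv v)`_j = oapp (fun j : 'I_N => v 0 j) 0 (insub j).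
Proof.
rewrite /pv coef_poly; case: ltnP => hj //.
by rewrite insubF // ltnNge hj.
Qed.

Lemma pv_lin N (x : F) (u v : 'rV[F]_N) : pv (x *: u + v) = x *: pv u + pv v.
Proof.
apply/polyP => j; rewrite coefD coefZ !coef_pv.
by case: insubP => [i _ _|_] /=; rewrite ?mxE ?mulr0 ?addr0.
Qed.

Lemma pvB N (u v : 'rV[F]_N) : pv (u - v) = pv u - pv v.
Proof. by rewrite addrC -scaleN1r pv_lin scaleN1r addrC. Qed.

Lemma pv_eq0 N (v : 'rV[F]_N) : pv v = 0 -> v = 0.
Proof.
move=> h; apply/matrixP => i j; rewrite (ord1 i) mxE -coef_pv_ord h coef0 //.
Qed.

Definition erow N (s : 'I_N) : 'rV[F]_N := \row_j ((j == s)%:R).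

Lemma pv_erow N (s : 'I_N) : pv (erow s) = 'X^s.
Proof.
apply/polyP => j; rewrite coef_pv coefXn.
case: insubP => [i _ <-|] /=; first by rewrite mxE.
by move=> hj; case: eqP => // hjs; rewrite hjs ltn_ord in hj.
Qed.

Lemma size_pv N (v : 'rV[F]_N) : (size (pv v) <= N)%N.
Proof. exact: size_poly. Qed.
End PV.
Lemma monic_eq (F : fieldType) N (v : 'rV[F]_N) :
  Poly (rcons (val [tuple v 0 i | i < N]) 1) = 'X^N + pv v.
Proof.
apply/polyP => j; rewrite coef_Poly coefD coefXn nth_rcons size_tuple coef_pv.
case: insubP => [i hi hij|hj] /=.
  have -> : (j == N) = false by apply/negP => /eqP e; move: (ltn_ord i); rewrite hij e ltnn.
  by rewrite hi add0r -hij (nth_map i) ?size_enum_ord ?ltn_ord // nth_ord_enum.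
by rewrite (negPf hj) addr0; case: eqP.
Qed.

Lemma sum_monic (F : finFieldType) (V : nmodType) N (G : {poly F} -> V) :
  \sum_(h <- monic_polys F N) G h = \sum_(v : 'rV[F]_N) G ('X^N + pv v).
Proof.
rewrite /monic_polys big_map big_enum /=.
rewrite (reindex (fun v : 'rV[F]_N => [tuple v 0 i | i < N])) /=.
  by apply: eq_bigr => v _; rewrite monic_eq.
exists (fun t : N.-tuple F => \row_i tnth t i) => [v _|t _].
  by apply/rowP => i; rewrite mxE tnth_mktuple.
by apply: eq_from_tnth => i; rewrite tnth_mktuple mxE.
Qed.
Section Main.
Variables (F : finFieldType) (R : realType) (psi : F -> R[i]).
Hypothesis hpsi : add_char psi.
Hypothesis hnt : nontrivial_char psi.
Variables (m : nat) (c : nat -> F).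
Hypothesis hcm : c m != 0.
Hypothesis h2 : (2%:R : F) != 0.
Variables (a : nat -> F) (n k N : nat) (g : {poly F}).
Hypothesis hn : n = (k + N)%N.
Hypothesis hg : size g = k.+1.

Lemma QA_eq f : QA m c a n f = Q0 m c n f + Lf a n f.
Proof. by []. Qed.

Definition Kz (z : 'rV[F]_N) : bool :=
  [forall w : 'rV[F]_N, Bf m c n (g * pv w) (g * pv z) == 0].

Lemma card_Kz : (#|[pred z | Kz z]| <= #|F| ^ (k + m))%N.
Proof.
pose f (z : 'rV[F]_N) : 'rV[F]_(k + m) := \row_(j < k + m) (pv z)`_(N - (k + m) + j).
have inj : {in [pred z | Kz z] &, injective f}.
  move=> z1 z2; rewrite !inE => /forallP K1 /forallP K2 hf.
  apply/eqP; rewrite -subr_eq0; apply/eqP; apply: pv_eq0.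
  apply/eqP; apply/negP => /negP hp0.
  have hsz : (size (pv (z1 - z2)) <= N - (k + m))%N.
    apply/leq_sizeP => j hj.
    case: (ltnP j N) => hjN; last by rewrite coef_pv_ge.
    have hj' : (j - (N - (k + m)) < k + m)%N by lia.
    have := congr1 (fun r : 'rV[F]_(k + m) => r 0 (Ordinal hj')) hf.
    rewrite /f !mxE /= subnKC // => e.
    by rewrite pvB coefB e subrr.
  have hle : (size (pv (z1 - z2)) + k + m <= N)%N.
    move: hsz; rewrite -size_poly_gt0 in hp0; move: hp0.
    case: (size (pv (z1 - z2))) => [//|sp] _ h.
    have : (k + m <= N)%N by move: h; case: (leqP (k+m) N) => //; move/ltnW; rewrite -subn_eq0 => /eqP ->.
    by move: h; lia.
  have [s [hs hB]] := key hcm h2 hn hg hp0 hle.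
  have := hB; rewrite pvB mulrBr BfB2.
  have := K1 (erow F (Ordinal hs)); have := K2 (erow F (Ordinal hs)).
  by rewrite !pv_erow /= => /eqP -> /eqP ->; rewrite subrr eqxx.
rewrite -(card_in_imset inj).
apply: leq_trans (max_card _) _.
by rewrite card_mx mul1n.
Qed.
Lemma inner_bound (z : 'rV[F]_N) :
  `|\sum_(w : 'rV[F]_N) psi (Bf m c n (g * ('X^N + pv w)) (g * pv z))|
    <= if Kz z then (#|F| ^ N)%:R else 0.
Proof.
case: ifP => hK.
  apply: le_trans (ler_norm_sum _ _ _) _.
  rewrite (eq_bigr (fun _ => 1)); last by move=> w _; rewrite (norm_psi hpsi).
  by rewrite sumr_const card_mx mul1n.
suff -> : \sum_(w : 'rV[F]_N) psi (Bf m c n (g * ('X^N + pv w)) (g * pv z)) = 0.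
  by rewrite normr0.
rewrite (eq_bigr (fun w => psi (Bf m c n (g * 'X^N) (g * pv z)) *
           psi (Bf m c n (g * pv w) (g * pv z)))); last first.
  by move=> w _; rewrite mulrDr BfD1 (psiD hpsi).
rewrite -mulr_sumr (char_sum0 hpsi hnt) ?mulr0 //.
  by move=> x u v /=; rewrite (pv_lin x u v) mulrDr -scalerAr BfDZ1.
move/negbT: hK; rewrite /Kz negb_forall => /existsP [w hw].
by exists w.
Qed.

Lemma Sg_sq :
  `|\sum_(v : 'rV[F]_N) psi (QA m c a n (g * ('X^N + pv v)))| ^+ 2
    <= (#|F| ^ (N + (k + m)))%:R.
Proof.
set S := \sum_(v : 'rV[F]_N) _.
have eQ A B : QA m c a n (A + B) - QA m c a n A = QA m c a n B + Bf m c n A B.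
  rewrite !QA_eq Q0D LfD; ring.
have expand : `|S| ^+ 2 = \sum_(z : 'rV[F]_N) (psi (QA m c a n (g * pv z)) *
       \sum_(w : 'rV[F]_N) psi (Bf m c n (g * ('X^N + pv w)) (g * pv z))).
  rewrite sqr_normc /S rmorph_sum mulr_suml.
  under eq_bigr do rewrite mulr_sumr.
  rewrite exchange_big /=.
  under eq_bigr => w _.
    rewrite (reindex_inj (@addIr _ w)) /=.
    under eq_bigr => z _.
      rewrite (conj_psi hpsi) -(psiD hpsi).
      have -> : g * ('X^N + pv (z + w)) = g * ('X^N + pv w) + g * pv z.
        by have := pv_lin 1 z w; rewrite !scale1r => ->; ring.
      rewrite eQ (psiD hpsi).
    over.
  over.
  rewrite exchange_big /=; apply: eq_bigr => z _.
  by rewrite mulr_sumr.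
have h0 : 0 <= `|S| ^+ 2 by rewrite exprn_ge0.
rewrite -(ger0_norm h0) expand.
apply: le_trans (ler_norm_sum _ _ _) _.
apply: le_trans (_ : \sum_(z : 'rV[F]_N) (if Kz z then (#|F| ^ N)%:R else 0) <= _).
  apply: ler_sum => z _; rewrite normrM (norm_psi hpsi) mul1r; exact: inner_bound.
rewrite -big_mkcond /= sumr_const.
rewrite -[_ *+ _]mulr_natr -natrM ler_nat expnD leq_mul2l; apply/orP; right.
exact: card_Kz.
Qed.
End Main.
Lemma size_monic (F : fieldType) k (t : k.-tuple F) : size (Poly (rcons (val t) 1)) = k.+1.
Proof.
by rewrite (@PolyK _ 0) ?last_rcons ?oner_neq0 // size_rcons size_tuple.
Qed.

Unset Implicit Arguments.
Set Strict Implicit.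

Theorem proposition7p2 (R : realType) (F : finFieldType) (hodd : odd #|F|)
    (m : nat) (c : nat -> F) (hcm : c m != 0) (C : R) (hC : 0 <= C) :
  exists (K : R) (eps : nat -> R),
    (forall d : R, 0 < d -> exists N0 : nat, forall n : nat,
        (N0 <= n)%N -> `|eps n| < d) /\
    exists n0 : nat, forall n k : nat, (n0 <= n)%N -> (k <= n)%N ->
      k%:R <= 9 * n%:R / 20 + C ->
      forall (a : nat -> F) (psi : F -> R[i]),
        add_char psi -> nontrivial_char psi ->
        Tk m c a psi n k
          <= (K * powR (#|F|%:R) (19 * n%:R / 20 + eps n * n%:R))%:C%C.
Proof.
set q : R := #|F|%:R.
have q1 : 1 <= q by rewrite /q ler1n; apply: leq_trans (finNzRing_gt1 F).
have q0 : q != 0 by apply: lt0r_neq0; apply: lt_le_trans q1.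
have h2 := TwoNZ.two_neq0 hodd.
exists (powR q (C + m%:R / 2)), (fun _ => 0); split.
  by move=> d hd; exists 0%N => n _; rewrite normr0.
exists 0%N => n k _ hkn hk a psi hpsi hnt.
set N := (n - k)%N.
have hn : n = (k + N)%N by rewrite /N subnKC.
set B : R := powR q ((n%:R + m%:R) / 2).
have hB : forall g : {poly F}, size g = k.+1 ->
    `|\sum_(h <- monic_polys F N) psi (QA m c a n (g * h))| <= (B%:C)%C.
  move=> g hg; rewrite sum_monic.
  have hsq := Sg_sq hpsi hnt hcm h2 a hn hg.
  rewrite -(ler_pXn2r (isT : (0 < 2)%N)) ?inE ?normr_ge0 ?ler0c ?powR_ge0 //.
  apply: le_trans hsq _.
  rewrite -(rmorph_nat (real_complex R)) -rmorphXn /= lecR.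
  rewrite /B -powR_mulrn ?powR_ge0 // -powRrM natrX -/q -powR_mulrn; last by apply: le_trans q1.
  rewrite hn !natrD; rewrite le_eqVlt; apply/orP; left; apply/eqP; congr (powR q _); field.
  by [].
  by rewrite qualifE /= ler0c powR_ge0.
rewrite /Tk /monic_polys big_map big_enum /=.
apply: le_trans (_ : \sum_(t : k.-tuple F) (B%:C)%C <= _).
  by apply: ler_sum => t _; apply: hB; exact: size_monic.
rewrite sumr_const card_tuple -raddfMn /= lecR.
have qge0 : 0 <= q by apply: le_trans q1.
rewrite mul0r addr0 -powRD; last by rewrite q0 implybT.
rewrite -[B *+ _]mulr_natr natrX -/q -powR_mulrn // /B -powRD; last by rewrite q0 implybT.
apply: ler_powR => //.
move: hk; rewrite hn !natrD => hk'; lra.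
Qed.
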